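(* Under the standing assumptions in the context, the coefficients $a_g$ satisfy $a_2=\tfrac{5}{24}$ and, for every $g\ge 3$, $$(3g-3)\,a_g=\frac12\left(\sum_{h=2}^{g-2}(3h-3)(3g-3h-3)\,a_h\,a_{g-h}+(3g-6)(3g-3)\,a_{g-1}\right).$$
   Context: Setting: the polynomial formulation of the BCOV holomorphic anomaly equations on a one-dimensional slice (local coordinate $z$) of the moduli space of a Calabi–Yau threefold. $C_{zzz}$ is the holomorphic Yukawa coupling, assumed nonzero. The genus-$g$ free energies $\mathcal F^{(g)}$ ($g\ge 1$) are polynomials in the generators $S^{zz},S^z,S,K_z$ with coefficients holomorphic (rational) in $z$. For $g\ge2$, $\mathcal F^{(g)}$ has degree $3g-3$ when $S^{zz},S^z,S,K_z$ are given weights $1,2,3,1$, and its term of highest degree in $S^{zz}$ is $a_g\,C_{zzz}^{2g-2}(S^{zz})^{3g-3}$ with $a_g\in\mathbb Q$. ''Lower order terms'' (l.o.t.) below means terms of lower degree in $S^{zz}$ relative to the displayed top term of the same weight. The covariant derivative $D_z$ acts as a derivation (Leibniz rule) and satisfies, at top order, $D_zS^{zz}=2S^z-C_{zzz}(S^{zz})^2+h^{zz}_z$ (with $h^{zz}_z$ holomorphic), so $D_zS^{zz}=-C_{zzz}(S^{zz})^2+\text{l.o.t.}$, and $D_zC_{zzz}=\partial_zC_{zzz}-3s^z_{zz}C_{zzz}-4K_zC_{zzz}+3C_{zzz}^2S^{zz}$ (with $s^z_{zz}$ holomorphic), so $D_zC_{zzz}=3C_{zzz}^2S^{zz}+\text{l.o.t.}$.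 The genus-one free energy satisfies $D_z\mathcal F^{(1)}=\tfrac12C_{zzz}S^{zz}+\text{l.o.t.}$. For $g\ge2$ the holomorphic anomaly equation in polynomial form reads $$\frac{\partial\mathcal F^{(g)}}{\partial S^{zz}}=\frac12\sum_{h=1}^{g-1}D_z\mathcal F^{(h)}\,D_z\mathcal F^{(g-h)}+\frac12 D_zD_z\mathcal F^{(g-1)},$$ together with $0=\partial_{K_z}\mathcal F^{(g)}+S^z\partial_S\mathcal F^{(g)}+S^{zz}\partial_{S^z}\mathcal F^{(g)}$. *)

(* Defs.v *)
From HB Require Import structures.
From mathcomp Require Import all_boot all_order all_algebra.
Set Implicit Arguments.
Unset Strict Implicit.
Unset Printing Implicit Defensive.
Import GRing.Theory.
Local Open Scope ring_scope.

(* Free energies are modelled as polynomials in the variable 'X = S^{zz}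
   with coefficients in a field F of characteristic 0 (a field containing
   C_{zzz}, S^z, S, K_z and the holomorphic coefficients). *)

Definition is_derivation (F : fieldType) (D : {poly F} -> {poly F}) : Prop :=
  (forall p q : {poly F}, D (p + q) = D p + D q) /\
  (forall p q : {poly F}, D (p * q) = D p * q + p * D q).

Definition top_term (F : fieldType) (p : {poly F}) (c : F) (n : nat) : Prop :=
  exists r : {poly F}, p = c *: 'X^n + r /\ (size r <= n)%N.

Definition dF (F : fieldType) (D : {poly F} -> {poly F}) (DF1 : {poly F})
  (Fg : nat -> {poly F}) (h : nat) : {poly F} :=
  if h == 1%N then DF1 else D (Fg h).

(* Main.v *)
Require Import Defs.
From HB Require Import structures.
From mathcomp Require Import all_boot all_order all_algebra.
From mathcomp Require Import ring zify.
Import GRing.Theory.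
Set Implicit Arguments.
Unset Strict Implicit.
Local Open Scope ring_scope.
Section Ratr.
Variable F : fieldType.
Hypothesis hchar : [pchar F] =i pred0.

Lemma natrF_eq0 n : (n%:R == 0 :> F) = (n == 0)%N.
Proof. by move/pcharf0P: hchar => ->. Qed.

Lemma intrF_eq0 (z : int) : (z%:~R == 0 :> F) = (z == 0).
Proof.
case: z => [n|n] /=; first by rewrite -pmulrn natrF_eq0.
by rewrite NegzE mulrNz oppr_eq0 -pmulrn natrF_eq0.
Qed.

Lemma intrF_inj : injective (fun z : int => z%:~R : F).
Proof.
move=> x y /= /eqP; rewrite -subr_eq0 -mulrzBr intrF_eq0 subr_eq0 => /eqP //.
Qed.

Let nz_den x : (denq x)%:~R != 0 :> F.
Proof. by rewrite intrF_eq0 denq_eq0. Qed.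

Lemma ratrF_add x y : @ratr F (x + y) = @ratr F x + @ratr F y.
Proof.
have injZtoQ: @injective rat int intr by apply: intr_inj.
rewrite /ratr.
apply: (canLR (mulfK (nz_den _))); apply: (mulIf (nz_den x)).
rewrite mulrAC mulrDl divfK ?nz_den // mulrAC -!rmorphM.
apply: (mulIf (nz_den y)); rewrite mulrAC mulrDl divfK ?nz_den //.
rewrite -!(rmorphM, rmorphD); congr _%:~R; apply: injZtoQ.
rewrite !(rmorphM, rmorphD) /= !numqE.
by rewrite (mulrAC y) -!mulrDl -mulrA mulrAC !mulrA.
Qed.

Lemma ratrF_mul x y : @ratr F (x * y) = @ratr F x * @ratr F y.
Proof.
have injZtoQ: @injective rat int intr by apply: intr_inj.
rewrite /ratr mulrC mulrAC; apply: canLR (mulKf (nz_den _)) _; rewrite !mulrA.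
do 2!apply: canRL (mulfK (nz_den _)) _; rewrite -!rmorphM; congr _%:~R.
apply: injZtoQ; rewrite !rmorphM [x * y]lock /= !numqE -lock.
by rewrite -!mulrA mulrA mulrCA -!mulrA (mulrCA y).
Qed.

Lemma ratrF_inj : injective (@ratr F).
Proof.
move=> x y E.
have: @ratr F (x - y) == 0.
  by rewrite ratrF_add -[- y]mulN1r ratrF_mul E -ratrF_mul mulN1r -ratrF_add subrr /ratr /= mul0r.
rewrite /ratr mulf_eq0 invr_eq0 (negbTE (nz_den _)) orbF intrF_eq0 numq_eq0 subr_eq0.
by move/eqP.
Qed.

Lemma ratrF_nat n : @ratr F n%:R = n%:R.
Proof. exact: ratr_nat. Qed.

Lemma ratrF_inv2 : @ratr F 2^-1 = 2^-1.
Proof.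
have h2 : (2%:R : F) != 0 by rewrite natrF_eq0.
apply: (mulfI h2); rewrite mulfV // -[X in X * _]ratrF_nat -ratrF_mul mulfV //.
by rewrite /ratr /= divr1.
Qed.

End Ratr.
Lemma top_termP (F : fieldType) (p : {poly F}) c n :
  top_term p c n <-> (size p <= n.+1)%N /\ p`_n = c.
Proof.
split.
  case=> r [-> hr]; split.
    rewrite (leq_trans (size_polyD _ _)) // geq_max (leq_trans hr) // andbT.
    by rewrite (leq_trans (size_scale_leq _ _)) ?size_polyXn.
  by rewrite coefD coefZ coefXn eqxx mulr1 (leq_sizeP _ _ hr) ?addr0.
case=> hs hc; exists (p - c *: 'X^n); split; first by rewrite addrC subrK.
apply/leq_sizeP => j hj; rewrite coefB coefZ coefXn.
case: (ltngtP n j) => [lt|lt|<-]; last by rewrite mulr1 hc subrr.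
  by rewrite (leq_sizeP _ _ hs) // mulr0 subr0.
by move: (leq_trans lt hj); rewrite ltnn.
Qed.

Section Deriv.
Variable F : fieldType.
Hypothesis hchar : [pchar F] =i pred0.
Variable D : {poly F} -> {poly F}.
Variable C : F.
Hypothesis hD : is_derivation D.
Hypothesis hDcoef : forall c : F, (size (D c%:P) <= 2)%N.
Hypothesis hDS : top_term (D 'X) (- C) 2.
Hypothesis hDC : top_term (D C%:P) (3 * C ^+ 2) 1.

Lemma DD p q : D (p + q) = D p + D q. Proof. by case: hD. Qed.
Lemma DM p q : D (p * q) = D p * q + p * D q. Proof. by case: hD. Qed.

Lemma D0 : D 0 = 0.
Proof. by apply: (addrI (D 0)); rewrite -DD !addr0. Qed.

Lemma DN p : D (- p) = - D p.
Proof. by apply: (addrI (D p)); rewrite -DD !subrr D0. Qed.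

Lemma D1 : D 1 = 0.
Proof.
have h := DM 1 1; rewrite !mulr1 !mul1r in h.
by apply: (addrI (D 1)); rewrite addr0 -h.
Qed.

Lemma Dnat n : D n%:R = 0.
Proof. by elim: n => [|n IH]; rewrite ?D0 // -addn1 natrD DD D1 IH addr0. Qed.

Lemma Dint (z : int) : D z%:~R = 0.
Proof.
case: z => n; first by rewrite -pmulrn Dnat.
by rewrite NegzE mulrNz DN -pmulrn Dnat oppr0.
Qed.

Lemma polyC_intr (z : int) : ((z%:~R : F)%:P : {poly F}) = z%:~R.
Proof. by rewrite polyCMz polyC1. Qed.

Lemma Dratr q : D (ratr q)%:P = 0.
Proof.
have nzd : ((denq q)%:~R : {poly F}) != 0.
  by rewrite -polyC_intr polyC_eq0 intrF_eq0 // denq_eq0.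
have E : ((denq q)%:~R : {poly F}) * (ratr q)%:P = (numq q)%:~R.
  by rewrite -!polyC_intr -polyCM /ratr mulrC divfK // intrF_eq0 // denq_eq0.
have := congr1 D E; rewrite DM !Dint mul0r add0r => /eqP.
by rewrite mulf_eq0 (negbTE nzd) /= => /eqP.
Qed.

Lemma DX_n n : (size (D 'X^n) <= n.+2)%N /\ (D 'X^n)`_n.+1 = - (n%:R * C).
Proof.
case/top_termP: hDS => hs hc.
elim: n => [|n [IHs IHc]].
  by rewrite expr0 D1 size_poly0 coef0 mul0r oppr0.
rewrite exprSr DM; split.
  rewrite (leq_trans (size_polyD _ _)) // geq_max; apply/andP; split.
    apply: (leq_trans (size_mul_leq _ _)); rewrite size_polyX addn2 /=.
    exact: leq_trans IHs _.
  apply: (leq_trans (size_mul_leq _ _)); rewrite size_polyXn addSn /=.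
  by rewrite -addn3 leq_add2l.
rewrite coefD coefMX /= IHc coefXnM.
have -> : (n.+2 < n)%N = false by apply/negbTE; rewrite -leqNgt leqW // leqnSn.
have -> : (n.+2 - n = 2)%N by rewrite -addn2 addKn.
rewrite hc.
by rewrite -addn1 natrD mulrDl mul1r opprD.
Qed.

Lemma Dmono c n : (size (D (c%:P * 'X^n)) <= n.+2)%N /\
  (D (c%:P * 'X^n))`_n.+1 = (D c%:P)`_1 - n%:R * C * c.
Proof.
have [hs hc] := DX_n n.
rewrite DM; split.
  rewrite (leq_trans (size_polyD _ _)) // geq_max; apply/andP; split.
    apply: (leq_trans (size_mul_leq _ _)); rewrite size_polyXn addnS /=.
    by rewrite -add2n leq_add2r hDcoef.
  apply: (leq_trans (size_mul_leq _ _)); rewrite size_polyC.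
  by case: (c != 0) => /=; rewrite ?add1n ?add0n // (leq_trans (leq_pred _) hs).
rewrite coefD coefMXn.
have -> : (n.+1 < n)%N = false by apply/negbTE; rewrite -leqNgt leqnSn.
rewrite subSnn coefCM hc.
by rewrite mulrN mulrC.
Qed.

Lemma Dweak n (p : {poly F}) : (size p <= n)%N -> (size (D p) <= n.+1)%N.
Proof.
elim: n p => [|n IH] p hp.
  by move: hp; rewrite leqn0 size_poly_eq0 => /eqP ->; rewrite D0 size_poly0.
have -> : p = (p - (p`_n)%:P * 'X^n) + (p`_n)%:P * 'X^n by rewrite subrK.
rewrite DD (leq_trans (size_polyD _ _)) // geq_max; apply/andP; split.
  apply: leq_trans (IH _ _) _ => //; apply/leq_sizeP => j hj.
  rewrite coefB coefCM coefXn; case: (ltngtP n j) => [lt|lt|<-].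
  - by rewrite (leq_sizeP _ _ hp j) // mulr0 subr0.
  - by move: (leq_trans lt hj); rewrite ltnn.
  - by rewrite mulr1 subrr.
by case: (Dmono p`_n n).
Qed.

Lemma Dtop n (p : {poly F}) : (size p <= n.+1)%N ->
  (size (D p) <= n.+2)%N /\ (D p)`_n.+1 = (D (p`_n)%:P)`_1 - n%:R * C * p`_n.
Proof.
move=> hp.
have hq : (size (p - (p`_n)%:P * 'X^n)%R <= n)%N.
  apply/leq_sizeP => j hj.
  rewrite coefB coefCM coefXn; case: (ltngtP n j) => [lt|lt|<-].
  - by rewrite (leq_sizeP _ _ hp j) // mulr0 subr0.
  - by move: (leq_trans lt hj); rewrite ltnn.
  - by rewrite mulr1 subrr.
have E : p = (p - (p`_n)%:P * 'X^n) + (p`_n)%:P * 'X^n by rewrite subrK.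
have hw := @Dweak n _ hq.
have [ms mc] := Dmono p`_n n.
rewrite [X in D X]E DD; split.
  by rewrite (leq_trans (size_polyD _ _)) // geq_max (leq_trans hw) //=.
by rewrite coefD (leq_sizeP _ _ hw) // add0r mc.
Qed.

Lemma DCk k : (D (C ^+ k)%:P)`_1 = (3 * k)%:R * C ^+ k.+1.
Proof.
case/top_termP: hDC => hs hc.
elim: k => [|k IH]; first by rewrite expr0 D1 coef0 mul0r.
rewrite exprS mulrC polyCM DM coefD coefMC IH coefCM hc.
rewrite mulnS natrD !exprS; ring.
Qed.

Lemma Dratmul q c : (D (ratr q * c)%:P)`_1 = ratr q * (D c%:P)`_1.
Proof. by rewrite polyCM DM Dratr mul0r add0r coefCM. Qed.

End Deriv.
Lemma top_mul (F : fieldType) (p q : {poly F}) m n al be :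
  (size p <= m.+1)%N -> p`_m = al -> (size q <= n.+1)%N -> q`_n = be ->
  (size (p * q)%R <= (m + n).+1)%N /\ (p * q)`_(m + n) = al * be.
Proof.
move=> hp hpc hq hqc; split.
  apply: (leq_trans (size_mul_leq _ _)).
  lia.
have [r [E hr]] : top_term p al m by apply/top_termP.
rewrite E mulrDl coefD -scalerAl coefZ coefXnM ltnNge leq_addr /= addKn hqc.
have hz : (size (r * q)%R <= m + n)%N by apply: leq_trans (size_mul_leq _ _) _; lia.
by rewrite (leq_sizeP _ _ hz (m + n)) // addr0.
Qed.

Lemma ratrF_sum (F : fieldType) (hchar : [pchar F] =i pred0) m n (f : nat -> rat) :
  @ratr F (\sum_(m <= i < n) f i) = \sum_(m <= i < n) ratr (f i).
Proof.
have r0 : @ratr F 0 = 0 by rewrite /ratr /= mul0r.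
rewrite /index_iota; move: (n - m)%N => k; elim: k m => [|k IH] m; first by rewrite !big_nil.
by rewrite /= !big_cons ratrF_add // IH.
Qed.

Section Main.
Variable F : fieldType.
Hypothesis hchar : [pchar F] =i pred0.
Variables (D : {poly F} -> {poly F}) (C : F) (DF1 : {poly F}) (Fg : nat -> {poly F}) (a : nat -> rat).
Hypothesis hD : is_derivation D.
Hypothesis hDcoef : forall c : F, (size (D c%:P) <= 2)%N.
Hypothesis hC : C != 0.
Hypothesis hDS : top_term (D 'X) (- C) 2.
Hypothesis hDC : top_term (D C%:P) (3 * C ^+ 2) 1.
Hypothesis hF1 : top_term DF1 (C / 2) 1.
Hypothesis hFg : forall g : nat, (2 <= g)%N ->
     top_term (Fg g) (ratr (a g) * C ^+ (2 * g - 2)) (3 * g - 3).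

Definition E (h : nat) : rat := if h == 1%N then 2^-1 else (3 * h - 3)%N%:R * a h.

Lemma dFtop h : (1 <= h)%N ->
  (size (dF D DF1 Fg h) <= (3 * h - 2).+1)%N /\
  (dF D DF1 Fg h)`_(3 * h - 2) = ratr (E h) * C ^+ (2 * h - 1).
Proof.
case: h => [|[|k]] // _.
  case/top_termP: hF1 => hs hc; rewrite /dF /E /= ratrF_inv2 // expr1 mulrC; split => //.
have := hFg (isT : (2 <= k.+2)%N); case/top_termP => hs hc.
have [ds dc] := Dtop hD hDcoef hDS hs.
have e1 : (3 * k.+2 - 3).+1 = (3 * k.+2 - 2)%N by lia.
rewrite /dF /E /= -e1; split => //.
rewrite dc hc Dratmul // DCk // ratrF_mul // ratrF_nat.
have -> : (2 * k.+2 - 1 = (2 * k.+2 - 2).+1)%N by lia.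
have -> : (3 * (2 * k.+2 - 2) = 6 * k + 6)%N by lia.
have -> : (3 * k.+2 - 3 = 3 * k + 3)%N by lia.
rewrite exprS; ring.
Qed.

Lemma DDtop g : (2 <= g)%N ->
  (size (D (dF D DF1 Fg (g - 1))) <= (3 * g - 4).+1)%N /\ (D (dF D DF1 Fg (g - 1)))`_(3 * g - 4) = ratr (E (g - 1) * (3 * g - 4)%N%:R) * C ^+ (2 * g - 2).
Proof.
case: g => [|[|k]] // _.
have [hs hc] := dFtop (isT : (1 <= k.+1)%N).
have [ds dc] := Dtop hD hDcoef hDS hs.
have e1 : ((3 * k.+1 - 2).+1 = 3 * k.+2 - 4)%N by lia.
rewrite subn1 /= -e1; split => //.
rewrite dc hc Dratmul // DCk // ratrF_mul // ratrF_nat.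
have -> : (2 * k.+2 - 2 = (2 * k.+1 - 1).+1)%N by lia.
have -> : (3 * (2 * k.+1 - 1) = 6 * k + 3)%N by lia.
have -> : (3 * k.+1 - 2 = 3 * k + 1)%N by lia.
rewrite exprS; ring.
Qed.


Hypothesis hHAE : forall g : nat, (2 <= g)%N ->
     deriv (Fg g) =
       (2^-1 : F) *: (\sum_(1 <= h < g) dF D DF1 Fg h * dF D DF1 Fg (g - h))
       + (2^-1 : F) *: D (dF D DF1 Fg (g - 1)).

Lemma keyId g : (2 <= g)%N ->
  (3 * g - 3)%N%:R * a g =
  2^-1 * (\sum_(1 <= h < g) E h * E (g - h) + E (g - 1) * (3 * g - 4)%N%:R).
Proof.
move=> hg.
have H := congr1 (fun p : {poly F} => p`_(3 * g - 4)) (hHAE hg); simpl in H.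
have e1 : (3 * g - 4).+1 = (3 * g - 3)%N by lia.
rewrite coef_deriv e1 coefD !coefZ coef_sum in H.
have := hFg hg; case/top_termP => _ hc; rewrite hc in H.
have [_ ddc] := DDtop hg; rewrite ddc in H.
rewrite (eq_big_nat _ _ (F2 := fun h => ratr (E h * E (g - h)) * C ^+ (2 * g - 2))) in H; last first.
  move=> h /andP [h1 h2].
  have [s1 c1] := dFtop h1.
  have h3 : (1 <= g - h)%N by lia.
  have [s2 c2] := dFtop h3.
  have [_ pc] := top_mul s1 c1 s2 c2.
  have -> : (3 * g - 4 = (3 * h - 2) + (3 * (g - h) - 2))%N by lia.
  rewrite pc ratrF_mul // mulrACA -exprD.
  by congr (_ * _ ^+ _); lia.
apply: (ratrF_inj hchar); apply: (mulIf (expf_neq0 (2 * g - 2) hC)).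
rewrite !(ratrF_mul hchar) (ratrF_add hchar) (ratrF_sum hchar) (ratrF_inv2 hchar) ratrF_nat.
rewrite -mulrA mulr_natl H.
by rewrite -[RHS]mulrA mulrDl mulr_suml mulrDr.
Qed.

End Main.
Unset Implicit Arguments.
Set Strict Implicit.

Theorem mainTheorem1
  (F : fieldType) (hchar : [pchar F] =i pred0)
  (D : {poly F} -> {poly F}) (C : F) (DF1 : {poly F})
  (Fg : nat -> {poly F}) (a : nat -> rat)
  (hD : is_derivation D)
  (hDcoef : forall c : F, (size (D c%:P) <= 2)%N)
  (hC : C != 0)
  (hDS : top_term (D 'X) (- C) 2)
  (hDC : top_term (D C%:P) (3 * C ^+ 2) 1)
  (hF1 : top_term DF1 (C / 2) 1)
  (hFg : forall g : nat, (2 <= g)%N ->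
     top_term (Fg g) (ratr (a g) * C ^+ (2 * g - 2)) (3 * g - 3))
  (hHAE : forall g : nat, (2 <= g)%N ->
     deriv (Fg g) =
       (2^-1 : F) *: (\sum_(1 <= h < g) dF D DF1 Fg h * dF D DF1 Fg (g - h))
       + (2^-1 : F) *: D (dF D DF1 Fg (g - 1))) :
  a 2%N = 5%:R / 24%:R /\
  (forall g : nat, (3 <= g)%N ->
     (3 * g - 3)%N%:R * a g =
       2^-1 * (\sum_(2 <= h < g - 1)
                  (3 * h - 3)%N%:R * (3 * g - 3 * h - 3)%N%:R * a h * a (g - h)%N
               + (3 * g - 6)%N%:R * (3 * g - 3)%N%:R * a (g - 1)%N)).
Proof.
have K := keyId hchar hD hDcoef hC hDS hDC hF1 hFg hHAE.
split.
  have := K 2%N isT; rewrite big_nat1 /E /= => h2.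
  rewrite (_ : (3 * 2 - 3 = 3)%N) // (_ : (3 * 2 - 4 = 2)%N) // in h2.
  have h3 : (3%:R : rat) != 0 by [].
  by apply: (mulfI h3); rewrite h2 /E /=; field.
case=> [|[|[|k]]] // _.
have := K k.+3 isT.
rewrite big_ltn // big_nat_recr //= => ->.
rewrite !subn1 /=.
have -> : (k.+3 - k.+2 = 1)%N by lia.
rewrite (eq_big_nat _ _ (F2 := fun h => (3 * h - 3)%N%:R * (3 * k.+3 - 3 * h - 3)%N%:R * a h * a (k.+3 - h)%N)); last first.
  move=> i /andP [i1 i2]; rewrite /E.
  have -> : (i == 1)%N = false by apply/negbTE; rewrite neq_ltn i1 orbT.
  have -> : (k.+3 - i == 1)%N = false by apply/negbTE; rewrite neq_ltn; apply/orP; right; lia.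
  have -> : (3 * (k.+3 - i) - 3 = 3 * k.+3 - 3 * i - 3)%N by lia.
  ring.
rewrite /E /=.
have -> : (3 * k.+2 - 3 = 3 * k + 3)%N by lia.
have -> : (3 * k.+3 - 4 = 3 * k + 5)%N by lia.
have -> : (3 * k.+3 - 6 = 3 * k + 3)%N by lia.
have -> : (3 * k.+3 - 3 = 3 * k + 6)%N by lia.
by field.
Qed.
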